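(* Let $F$ be the elementary cellular automaton with rule number 132. Then $D(\textsc{Pred}_{F,n})=O(\log n)$.
   Context: An elementary cellular automaton (ECA) with rule number $N\in\{0,\dots,255\}$ is the map $F:\{0,1\}^{\mathbb Z}\to\{0,1\}^{\mathbb Z}$ given by $F(x)_i=f(x_{i-1},x_i,x_{i+1})$. Here the local rule $f:\{0,1\}^3\to\{0,1\}$ is determined by $N=\sum_{a,b,c\in\{0,1\}}2^{4a+2b+c}f(a,b,c)$. On a finite word of length $m\ge 3$, $F$ produces the word of length $m-2$ obtained by applying $f$ at every position whose full neighbourhood lies in the word. For $n\ge1$, $\textsc{Pred}_{F,n}:\{0,1\}^{2n+1}\to\{0,1\}$ maps a word $x=x_{-n}\cdots x_n$ to the single letter of $F^n(x)$, i.e. the state of the central cell after $n$ steps. For a function $g:X\times Y\to Z$, $D(g)$ is the minimal depth of a deterministic two-party protocol computing $g$. In such a protocol, Alice knows $x$ and Bob knows $y$. The protocol is a binary tree: each internal node is labelled by a function of Alice's input only or of Bob's input only, with values in $\{\text{left},\text{right}\}$, and each leaf is labelled by an output value. For $g:\{0,1\}^m\to Z$, set $D(g)=\max_{0\le i<m}D(g_i)$, where $g_i:\{0,1\}^i\times\{0,1\}^{m-i}\to Z$ is $g_i(x,y)=g(xy)$. *)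

(* Defs.v *)
From mathcomp Require Import all_boot.
Set Implicit Arguments. Unset Strict Implicit. Unset Printing Implicit Defensive.

Definition eca_local (N : nat) (a b c : bool) : bool :=
  odd (N %/ 2 ^ (4 * a + 2 * b + c)).

Definition eca_step (N : nat) (w : seq bool) : seq bool :=
  [seq eca_local N (nth false w j) (nth false w j.+1) (nth false w j.+2)
  | j <- iota 0 (size w - 2)].

(* Pred_{F,n}(x) : the single letter of F^n(x) (x of length 2n+1). *)
Definition Pred (N n : nat) (x : seq bool) : bool :=
  head false (iter n (eca_step N) x).

Inductive protocol (X Y Z : Type) : Type :=
  | Leaf of Z
  | NodeA of (X -> bool) & protocol X Y Z & protocol X Y Z
      (* Alice speaks; false = left, true = right *)
  | NodeB of (Y -> bool) & protocol X Y Z & protocol X Y Z.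

Arguments Leaf {X Y Z}.
Arguments NodeA {X Y Z}.
Arguments NodeB {X Y Z}.

Fixpoint prot_eval X Y Z (p : protocol X Y Z) (x : X) (y : Y) : Z :=
  match p with
  | Leaf z => z
  | NodeA f l r => if f x then prot_eval r x y else prot_eval l x y
  | NodeB g l r => if g y then prot_eval r x y else prot_eval l x y
  end.

Fixpoint prot_depth X Y Z (p : protocol X Y Z) : nat :=
  match p with
  | Leaf _ => 0
  | NodeA _ l r => (maxn (prot_depth l) (prot_depth r)).+1
  | NodeB _ l r => (maxn (prot_depth l) (prot_depth r)).+1
  end.

(* "D(g) <= k" for g : X * Y -> Z : some protocol of depth <= k computes g.
   (D(g) is the minimum such k, so D(g) <= k is exactly this.) *)
Definition D2_le X Y Z (g : X -> Y -> Z) (k : nat) : Prop :=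
  exists p : protocol X Y Z,
    prot_depth p <= k /\ forall x y, prot_eval p x y = g x y.

(* "D(g) <= k" for g : {0,1}^m -> Z, i.e. max_{0<=i<m} D(g_i) <= k,
   where g_i(x,y) = g(xy), x in {0,1}^i, y in {0,1}^(m-i). *)
Definition Dword_le Z (m : nat) (g : seq bool -> Z) (k : nat) : Prop :=
  forall i, i < m ->
    D2_le (fun (x : i.-tuple bool) (y : (m - i).-tuple bool) =>
             g (tval x ++ tval y)) k.

(* Main.v *)
Require Import Defs.
From mathcomp Require Import all_boot zify.

Lemma l132 (a b c : bool) : eca_local 132 a b c = b && (a == c).
Proof. by case: a; case: b; case: c. Qed.

Fixpoint Qp (l : seq (bool * bool)) : bool :=
  match l with [::] => true | p :: l' => if p.1 && p.2 then Qp l' else p.1 == p.2 end.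

Definition Fp (p q r : bool * bool) := (q.1 && (p.1 == r.1), q.2 && (p.2 == r.2)).

Fixpoint Sp (l : seq (bool * bool)) : seq (bool * bool) :=
  match l with
  | a :: ((b :: (c :: _)) as t) => Fp a b c :: Sp t
  | _ => [::] end.

Definition pairs (m : nat) (w : seq bool) :=
  [seq (nth false w (m - d), nth false w (m + d)) | d <- iota 1 m].

Lemma size_Sp l : size (Sp l) = size l - 2.
Proof.
elim: l => [|a l IH] //=. case: l IH => [|b [|c l]] //= IH.
rewrite IH /=. lia.
Qed.

Lemma nth_Sp l j : j < size l - 2 ->
  nth (false,false) (Sp l) j =
  Fp (nth (false,false) l j) (nth (false,false) l j.+1) (nth (false,false) l j.+2).
Proof.
elim: l j => [|a l IH] j //=. case: l IH => [|b [|c l]] IH //=; try lia.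
case: j => [|j] //= H. rewrite IH //=. lia.
Qed.

Lemma Sp_11 l : Qp (Sp ((true,true)::(true,true)::l)) = Qp l.
Proof.
elim: l => [|q l IH] //=. case: q => [[] []] //=.
Qed.

Lemma abs_step (c a b : bool) l :
  (c && (a == b)) && Qp (Sp ((c,c)::(a,b)::l)) = c && Qp ((a,b)::l).
Proof.
case: c => //=. case: a; case: b => //=; first by rewrite Sp_11.
by case: l => [|q l].
Qed.

Lemma size_step N w : size (eca_step N w) = size w - 2.
Proof. by rewrite /eca_step size_map size_iota. Qed.

Lemma nth_step N w j : j < size w - 2 ->
  nth false (eca_step N w) j = eca_local N (nth false w j) (nth false w j.+1) (nth false w j.+2).
Proof. move=> H. by rewrite /eca_step (nth_map 0) ?size_iota // nth_iota. Qed.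

Lemma nth_pairs m w j : j < m ->
  nth (false,false) (pairs m w) j = (nth false w (m - j.+1), nth false w (m + j.+1)).
Proof. move=> H. by rewrite /pairs (nth_map 0) ?size_iota // nth_iota. Qed.

Lemma size_pairs m w : size (pairs m w) = m.
Proof. by rewrite /pairs size_map size_iota. Qed.

Lemma nthL m w e : e <= m.+1 ->
  nth (false,false) ((nth false w m.+1, nth false w m.+1) :: pairs m.+1 w) e =
  (nth false w (m.+1 - e), nth false w (m.+1 + e)).
Proof.
case: e => [|e] H /=; first by rewrite subn0 addn0.
by rewrite nth_pairs.
Qed.

Lemma pairs_step m w : size w = (2 * m.+1).+1 ->
  pairs m (eca_step 132 w) = Sp ((nth false w m.+1, nth false w m.+1) :: pairs m.+1 w).
Proof.
move=> Hs. apply: (@eq_from_nth _ (false,false)).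
  rewrite size_Sp size_pairs /= size_map size_iota; lia.
rewrite size_pairs => j Hj.
rewrite nth_Sp; last by rewrite /= size_map size_iota; lia.
rewrite nth_pairs // !nthL; try lia.
have -> : m.+1 - j.+1 = (m - j.+1).+1 by lia.
have -> : m.+1 - j = (m - j.+1).+2 by lia.
have -> : m.+1 - j.+2 = m - j.+1 by lia.
have -> : m.+1 + j.+1 = (m + j.+1).+1 by lia.
have -> : m.+1 + j.+2 = (m + j.+1).+2 by lia.
have -> : m.+1 + j = m + j.+1 by lia.
rewrite !nth_step ?size_step; try lia.
rewrite !l132 /Fp /=.
by rewrite [nth false w (m - j.+1) == _]eq_sym.
Qed.

Lemma Pred_char n w : size w = (2 * n).+1 ->
  Pred 132 n w = nth false w n && Qp (pairs n w).
Proof.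
elim: n w => [|n IH] w Hs.
  by rewrite /Pred /= andbT; case: w Hs.
rewrite /Pred iterSr -/(Pred 132 n _) IH; last by rewrite size_step; lia.
rewrite nth_step; last by lia.
rewrite pairs_step // l132.
have -> : pairs n.+1 w = (nth false w n, nth false w n.+2) :: behead (pairs n.+1 w).
  by rewrite /pairs /= subSS subn0 addn1.
by rewrite abs_step.
Qed.

Lemma Qp_eq l1 l2 : size l1 = size l2 ->
  (forall e, e < size l1 ->
     (forall e', e' < e -> (nth (false,false) l1 e').1 && (nth (false,false) l1 e').2) ->
     nth (false,false) l1 e = nth (false,false) l2 e) ->
  Qp l1 = Qp l2.
Proof.
elim: l1 l2 => [|p l1 IH] l2; case: l2 => [|q l2] //=.
move=> [Hs] H.
have E0 := H 0 erefl (fun e' (h : e' < 0) => False_ind _ (notF h)).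
rewrite /= in E0; subst q.
case: ifP => // Hp. apply: IH => // e He Hpre.
apply: (H e.+1) => //. case=> [|e'] //= He'. exact: Hpre.
Qed.

Lemma Qpairs_eq n w1 w2 :
  (forall d, 0 < d <= n ->
     (forall d', 0 < d' < d -> nth false w1 (n - d') && nth false w1 (n + d')) ->
     nth false w1 (n - d) = nth false w2 (n - d) /\ nth false w1 (n + d) = nth false w2 (n + d)) ->
  Qp (pairs n w1) = Qp (pairs n w2).
Proof.
move=> H. apply: Qp_eq; first by rewrite !size_pairs.
rewrite size_pairs => e He Hpre. rewrite !nth_pairs //.
have Hp : forall d', 0 < d' < e.+1 -> nth false w1 (n - d') && nth false w1 (n + d').
  move=> d' Hd'. have := Hpre d'.-1 (ltac:(lia)). rewrite nth_pairs /=; last by lia.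
  by rewrite prednK //; lia.
have [-> ->] := H e.+1 (ltac:(lia)) Hp. by [].
Qed.

Definition ld (y : seq bool) := find negb y.

Lemma ld_eq y1 y2 k : size y1 = size y2 -> ld y1 = ld y2 -> k < size y1 ->
  (forall k', k' < k -> nth false y1 k') -> nth false y1 k = nth false y2 k.
Proof.
rewrite /ld => Hs Hl Hk Hpre.
have [lt|gt|Heq] := ltngtP k (find negb y1).
- have h1 := before_find false lt. rewrite Hl in lt. have h2 := before_find false lt.
  by move/negbFE: h1 => ->; move/negbFE: h2 => ->.
- have hh1 : has negb y1 by rewrite has_find; lia.
  have := nth_find false hh1. by rewrite Hpre.
- have hh1 : has negb y1 by rewrite has_find -Heq.
  have hh2 : has negb y2 by rewrite has_find -Hl -Heq -Hs.
  have h1 := nth_find false hh1. have h2 := nth_find false hh2.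
  rewrite -Hl -Heq in h2. rewrite -Heq in h1.
  by move/negPf: h1 => ->; move/negPf: h2 => ->.
Qed.

Definition tr (x : seq bool) := ld (rev x).

Lemma tr_eq x1 x2 j : size x1 = size x2 -> tr x1 = tr x2 -> j < size x1 ->
  (forall j', j < j' < size x1 -> nth false x1 j') -> nth false x1 j = nth false x2 j.
Proof.
move=> Hs Hl Hj Hpre.
have e1 : nth false x1 j = nth false (rev x1) (size x1 - j.+1).
  rewrite nth_rev; last by lia. congr nth; lia.
have e2 : nth false x2 j = nth false (rev x2) (size x1 - j.+1).
  rewrite nth_rev; last by lia. congr nth; lia.
rewrite e1 e2. apply: ld_eq => //; rewrite ?size_rev //; first by lia.
move=> k' Hk'. rewrite nth_rev; last by lia. apply: Hpre. lia.
Qed.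

Lemma caseA n x1 x2 y : size x1 = size x2 -> size x1 <= n -> tr x1 = tr x2 ->
  size x1 + size y = (2 * n).+1 ->
  Pred 132 n (x1 ++ y) = Pred 132 n (x2 ++ y).
Proof.
move=> Hs Hi Ht Hy.
rewrite !Pred_char ?size_cat; try lia.
rewrite !nth_cat -Hs. have -> : (n < size x1) = false by lia.
congr andb. apply: Qpairs_eq => d Hd Hpre.
rewrite !nth_cat -Hs. have -> : (n + d < size x1) = false by lia.
split=> //. case: ifP => // Hlt. apply: tr_eq => // j' Hj'.
have := Hpre (n - j') (ltac:(lia)). rewrite nth_cat.
have -> : n - (n - j') = j' by lia. by rewrite (proj2 (andP Hj')) => /andP [].
Qed.

Lemma caseB n x y1 y2 : size y1 = size y2 -> n < size x -> ld y1 = ld y2 ->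
  size x + size y1 = (2 * n).+1 ->
  Pred 132 n (x ++ y1) = Pred 132 n (x ++ y2).
Proof.
move=> Hs Hi Ht Hy.
rewrite !Pred_char ?size_cat; try lia.
rewrite !nth_cat Hi.
congr andb. apply: Qpairs_eq => d Hd Hpre.
rewrite !nth_cat. have -> : (n - d < size x) by lia.
split=> //. case: ifP => // Hlt. apply: ld_eq => //; first by lia.
move=> k' Hk'.
have := Hpre (size x + k' - n) (ltac:(lia)). rewrite nth_cat.
have -> : n + (size x + k' - n) = size x + k' by lia.
move=> /andP [_]. rewrite nth_cat. have -> : (size x + k' < size x) = false by lia. by rewrite addKn.
Qed.

Fixpoint searchA {X Y : Type} (s : X -> nat) (leaf : nat -> protocol X Y bool) (k lo : nat)
  : protocol X Y bool :=
  match k with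
  | 0 => leaf lo
  | k'.+1 => NodeA (fun x => lo + 2 ^ k' <= s x) (searchA s leaf k' lo)
                   (searchA s leaf k' (lo + 2 ^ k'))
  end.

Fixpoint searchB {X Y : Type} (s : Y -> nat) (leaf : nat -> protocol X Y bool) (k lo : nat)
  : protocol X Y bool :=
  match k with
  | 0 => leaf lo
  | k'.+1 => NodeB (fun y => lo + 2 ^ k' <= s y) (searchB s leaf k' lo)
                   (searchB s leaf k' (lo + 2 ^ k'))
  end.

Lemma searchA_eval X Y s leaf k lo (x : X) (y : Y) : lo <= s x < lo + 2 ^ k ->
  prot_eval (searchA s leaf k lo) x y = prot_eval (leaf (s x)) x y.
Proof.
elim: k lo => [|k IH] lo /= H.
  have -> : s x = lo by rewrite expn0 in H; lia.
  by [].
rewrite expnS in H. case: ifP => h; apply: IH; lia.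
Qed.

Lemma searchB_eval X Y s leaf k lo (x : X) (y : Y) : lo <= s y < lo + 2 ^ k ->
  prot_eval (searchB s leaf k lo) x y = prot_eval (leaf (s y)) x y.
Proof.
elim: k lo => [|k IH] lo /= H.
  have -> : s y = lo by rewrite expn0 in H; lia.
  by [].
rewrite expnS in H. case: ifP => h; apply: IH; lia.
Qed.

Lemma searchA_depth X Y (s : X -> nat) (leaf : nat -> protocol X Y bool) c k lo :
  (forall v, prot_depth (leaf v) <= c) -> prot_depth (searchA s leaf k lo) <= k + c.
Proof.
move=> H; elim: k lo => [|k IH] lo /=; first exact: H.
have := IH lo; have := IH (lo + 2 ^ k). lia.
Qed.

Lemma searchB_depth X Y (s : Y -> nat) (leaf : nat -> protocol X Y bool) c k lo :
  (forall v, prot_depth (leaf v) <= c) -> prot_depth (searchB s leaf k lo) <= k + c.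
Proof.
move=> H; elim: k lo => [|k IH] lo /=; first exact: H.
have := IH lo; have := IH (lo + 2 ^ k). lia.
Qed.

Lemma D2A X Y (g : X -> Y -> bool) (s : X -> nat) (h : nat -> Y -> bool) k :
  (forall x, s x < 2 ^ k) -> (forall x y, g x y = h (s x) y) -> D2_le g k.+1.
Proof.
move=> Hs Hg.
exists (searchA s (fun v => NodeB (fun y => h v y) (Leaf false) (Leaf true)) k 0).
split.
  rewrite -addn1. apply: searchA_depth => v /=. by [].
move=> x y. rewrite searchA_eval /=; last by have := Hs x; lia.
by rewrite Hg; case: (h _ _).
Qed.

Lemma D2B X Y (g : X -> Y -> bool) (s : Y -> nat) (h : nat -> X -> bool) k :
  (forall y, s y < 2 ^ k) -> (forall x y, g x y = h (s y) x) -> D2_le g k.+1.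
Proof.
move=> Hs Hg.
exists (searchB s (fun v => NodeA (fun x => h v x) (Leaf false) (Leaf true)) k 0).
split.
  rewrite -addn1. apply: searchB_depth => v /=. by [].
move=> x y. rewrite searchB_eval /=; last by have := Hs y; lia.
by rewrite Hg; case: (h _ _).
Qed.

Lemma D2_mono X Y Z (g : X -> Y -> Z) k K : k <= K -> D2_le g k -> D2_le g K.
Proof. move=> hk [p [hp he]]; exists p; split => //; exact: leq_trans hk. Qed.

Definition canonA i t := nseq (i - t) false ++ nseq t true.
Definition canonB r t := nseq t true ++ nseq (r - t) false.

Lemma canonA_size i t : t <= i -> size (canonA i t) = i.
Proof. by rewrite /canonA size_cat !size_nseq; lia. Qed.
Lemma canonB_size r t : t <= r -> size (canonB r t) = r.
Proof. by rewrite /canonB size_cat !size_nseq; lia. Qed.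

Lemma ld_canonB r t : ld (canonB r t) = t.
Proof.
rewrite /ld /canonB find_cat.
have -> : has negb (nseq t true) = false by elim: t.
rewrite size_nseq. by case: (r - t) => [|u] /=; rewrite addn0.
Qed.

Lemma tr_canonA i t : tr (canonA i t) = t.
Proof. by rewrite /tr /canonA rev_cat !rev_nseq ld_canonB. Qed.

Lemma ld_size y : ld y <= size y.
Proof. exact: find_size. Qed.
Lemma tr_size x : tr x <= size x.
Proof. by rewrite /tr -size_rev; exact: ld_size. Qed.

Theorem mainTheorem17 :
  exists (C n0 : nat), forall n : nat, n0 <= n ->
    Dword_le (2 * n + 1) (Pred 132 n) (C * trunc_log 2 n).
Proof.
exists 3, 2 => n Hn i Hi.
have Hk := @trunc_log_ltn 2 n erefl.
have Hl : 1 <= trunc_log 2 n by apply: trunc_log_max => //; rewrite expn1.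
apply: (@D2_mono _ _ _ _ (trunc_log 2 n).+2); first by lia.
case: (leqP i n) => Hin.
- apply: (@D2A _ _ _ (fun x : i.-tuple bool => tr (tval x))
              (fun t (y : (2 * n + 1 - i).-tuple bool) => Pred 132 n (canonA i t ++ tval y))).
    move=> x. have := tr_size (tval x). rewrite size_tuple. lia.
  move=> x y. apply: caseA.
  + rewrite size_tuple canonA_size //. by have := tr_size (tval x); rewrite size_tuple.
  + by rewrite size_tuple.
  + by rewrite tr_canonA.
  + rewrite !size_tuple. lia.
- apply: (@D2B _ _ _ (fun y : (2 * n + 1 - i).-tuple bool => ld (tval y))
              (fun t (x : i.-tuple bool) => Pred 132 n (tval x ++ canonB (2 * n + 1 - i) t))).
    move=> y. have := ld_size (tval y). rewrite size_tuple. lia.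
  move=> x y. apply: caseB.
  + rewrite size_tuple canonB_size //. by have := ld_size (tval y); rewrite size_tuple.
  + by rewrite size_tuple.
  + by rewrite ld_canonB.
  + rewrite !size_tuple. lia.
Qed.
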